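(* Let $G\in\mathcal G^3_2$, let $a\in V(G)$ with $d(a)=3$, and let $x_1,x_2$ be two distinct neighbours of $a$. Suppose that for $j=1,2$ the vertex $x_j$ belongs to a $5$-leaf $X_j$ of $G$, where $X_1$ and $X_2$ are vertex-disjoint and $a\notin V(X_1)\cup V(X_2)$. Let $G'$ be obtained from $G-\big((V(X_1)\cup V(X_2))\setminus\{x_1,x_2\}\big)$ by adding the new edge $x_1x_2$. Then $\lambda(G')\ge v(G')/4$ implies $\lambda(G)\ge v(G)/4$.
   Context: All graphs are finite and simple. For integers $1\le r\le s$, $\mathcal G^s_r$ denotes the set of graphs in which every vertex has degree at least $r$ and at most $s$. $d(x)$ is the degree of $x$ in $G$, $v(\cdot)$ the number of vertices. $\lambda(G)$ denotes the maximum number of pairwise vertex-disjoint subgraphs of $G$ each of which is a path with exactly two edges. A block of a connected graph is a maximal connected subgraph $H$ such that $H-v$ is connected for every $v\in V(H)$. A block $B$ of $G$ is an end-block if exactly one vertex of $B$ is adjacent to a vertex of $G-B$. A leaf of $G$ is a vertex of degree one or an end-block with at least two edges; a $5$-leaf is a leaf with exactly $5$ vertices. *)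

(* Defs.v *)
(* A finite simple graph is represented on an ambient
   finType T by a vertex set V : {set T} and a symmetric irreflexive
   adjacency relation e : rel T; only edges between vertices of V count. *)
From mathcomp Require Import all_boot.
Set Implicit Arguments. Unset Strict Implicit. Unset Printing Implicit Defensive.

Section Graphs.
Variable T : finType.

Definition simple_graph (e : rel T) := symmetric e /\ irreflexive e.

Definition nbhd (V : {set T}) (e : rel T) (x : T) : {set T} :=
  [set y in V | e x y].
Definition deg (V : {set T}) (e : rel T) (x : T) : nat := #|nbhd V e x|.

Definition in_Gclass (r s : nat) (V : {set T}) (e : rel T) :=
  forall x, x \in V -> r <= deg V e x <= s.

Definition restr (B : {set T}) (e : rel T) : rel T :=
  [rel x y | [&& x \in B, y \in B & e x y]].

Definition conn_set (B : {set T}) (e : rel T) :=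
  forall x y, x \in B -> y \in B -> connect (restr B e) x y.

Definition block_like (B : {set T}) (e : rel T) :=
  conn_set B e /\ forall v, v \in B -> conn_set (B :\ v) e.

(* a block of G: maximal such (induced) subgraph; maximal subgraphs with
   this property are automatically induced, so we work with vertex sets *)
Definition is_block (V B : {set T}) (e : rel T) :=
  [/\ B \subset V, block_like B e &
      forall B' : {set T}, B \subset B' -> B' \subset V -> block_like B' e -> B' = B].

Definition is_end_block (V B : {set T}) (e : rel T) :=
  is_block V B e /\
  #|[set x in B | [exists y in V :\: B, e x y]]| = 1.

Definition n_edges (B : {set T}) (e : rel T) : nat :=
  #|[set p : T * T | [&& p.1 \in B, p.2 \in B & e p.1 p.2]]| %/ 2.

(* a 5-leaf: a leaf with exactly 5 vertices; a degree-one vertex has one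
   vertex, so this is an end-block with at least 2 edges and 5 vertices *)
Definition is_5leaf (V B : {set T}) (e : rel T) :=
  [/\ is_end_block V B e, 2 <= n_edges B e & #|B| = 5].

Definition is_P3 (V : {set T}) (e : rel T) (p : T * T * T) :=
  let: (u, c, w) := p in
  [&& u \in V, c \in V, w \in V, u != c, c != w, u != w, e u c & e c w].

Definition P3_verts (p : T * T * T) : {set T} :=
  let: (u, c, w) := p in [set u; c; w].

Definition P3_packing (V : {set T}) (e : rel T) (S : {set T * T * T}) :=
  [forall p in S, is_P3 V e p] &&
  [forall p in S, forall q in S, (p != q) ==> [disjoint P3_verts p & P3_verts q]].

Definition lambda (V : {set T}) (e : rel T) : nat :=
  \max_(S : {set T * T * T} | P3_packing V e S) #|S|.

Definition Gp_verts (V X1 X2 : {set T}) (x1 x2 : T) : {set T} :=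
  V :\: ((X1 :|: X2) :\: [set x1; x2]).
Definition Gp_rel (e : rel T) (x1 x2 : T) : rel T :=
  [rel x y | [|| e x y, (x == x1) && (y == x2) | (x == x2) && (y == x1)]].

End Graphs.

(* Main.v *)
Require Import Defs.
From mathcomp Require Import all_boot zify.
Set Implicit Arguments. Unset Strict Implicit. Unset Printing Implicit Defensive.


Lemma cut_edge (T : finType) (B : {set T}) (e : rel T) (P : pred T) a b :
  conn_set B e -> a \in B -> b \in B -> P a -> ~~ P b ->
  exists u w, [/\ u \in B, w \in B, P u, ~~ P w & e u w].
Proof.
move=> hc aB bB Pa Pb; move: (hc a b aB bB) => /connectP [p pth lst].
elim: p a aB Pa pth lst => [|h p IH] a aB Pa /=.
  by move=> _ Eb; subst; rewrite Pa in Pb.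
case/andP => /= /and3P[_ hB eah] pth lst.
case Ph: (P h); first by apply: (IH h).
by exists a, h; rewrite Ph.
Qed.

Lemma conn4 (T : finType) (B : {set T}) (e : rel T) a b c d :
  symmetric e ->
  a != b -> a != c -> a != d -> b != c -> b != d -> c != d ->
  (forall z, (z \in B) = [|| z == a, z == b, z == c | z == d]) ->
  conn_set B e ->
  [&& e a b || e a c || e a d, e a b || e b c || e b d, e a c || e b c || e c d,
      e a d || e b d || e c d, e a c || e a d || e b c || e b d,
      e a b || e a d || e b c || e c d & e a b || e a c || e b d || e c d].
Proof.
move=> es hab hac had hbc hbd hcd hB hc.
have hba : b != a by rewrite eq_sym.
have hca : c != a by rewrite eq_sym.
have hda : d != a by rewrite eq_sym.
have hcb : c != b by rewrite eq_sym.
have hdb : d != b by rewrite eq_sym.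
have hdc : d != c by rewrite eq_sym.
have D := (negbTE hab, negbTE hac, negbTE had, negbTE hbc, negbTE hbd, negbTE hcd,
           negbTE hba, negbTE hca, negbTE hda, negbTE hcb, negbTE hdb, negbTE hdc).
have aB : a \in B by rewrite hB eqxx.
have bB : b \in B by rewrite hB eqxx orbT.
have cB : c \in B by rewrite hB eqxx !orbT.
have dB : d \in B by rewrite hB eqxx !orbT.
have fin : forall (P : pred T) x y, x \in B -> y \in B -> P x -> ~~ P y ->
  exists u w, [/\ u \in B, w \in B, P u, ~~ P w & e u w].
  by move=> P x y xB yB Px Py; apply: (cut_edge hc xB yB Px Py).
Ltac fin_tac D hB es :=
  let u := fresh "u" in let w := fresh "w" in
  let uB := fresh in let wB := fresh in
  let Pu := fresh in let Pw := fresh in let h := fresh "h" in let h' := fresh "h" in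
  move=> [u [w [uB wB Pu Pw h]]]; move: Pu Pw h; rewrite hB in uB; rewrite hB in wB;
  case/or4P: uB => /eqP->; case/or4P: wB => /eqP->; rewrite /= ?eqxx ?D //= => _ _ h;
  move: (h); rewrite es => h'; rewrite ?h ?h' ?orbT //.
apply/and5P; split; last apply/and3P; try split.
- by have := fin (pred1 a) a b aB bB (eqxx _) hba; fin_tac D hB es.
- by have := fin (pred1 b) b a bB aB (eqxx _) hab; fin_tac D hB es.
- by have := fin (pred1 c) c a cB aB (eqxx _) hac; fin_tac D hB es.
- by have := fin (pred1 d) d a dB aB (eqxx _) had; fin_tac D hB es.
- have := fin [pred z | (z == a) || (z == b)] a c aB cB; rewrite /= eqxx !D /=.
  by move=> H; have := H isT isT; fin_tac D hB es.
- have := fin [pred z | (z == a) || (z == c)] a b aB bB; rewrite /= eqxx !D /=.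
  by move=> H; have := H isT isT; fin_tac D hB es.
- have := fin [pred z | (z == a) || (z == d)] a b aB bB; rewrite /= eqxx !D /=.
  by move=> H; have := H isT isT; fin_tac D hB es.
Qed.


Lemma P3sub (T : finType) (A : {set T}) u c w :
  u \in A -> c \in A -> w \in A -> P3_verts (u, c, w) \subset A.
Proof. by move=> uA cA wA; rewrite /P3_verts !subUset !sub1set uA cA wA. Qed.

Lemma nsf (T : eqType) (a b : T) : a != b -> (b == a) = false.
Proof. by rewrite eq_sym => /negbTE. Qed.
Lemma nsf_ (T : eqType) (a b : T) : a != b -> b != a.
Proof. by rewrite eq_sym. Qed.

Lemma leaf_P3 (T : finType) (V X : {set T}) (e : rel T) x :
  simple_graph e -> X \subset V -> block_like X e -> #|X| = 5 -> x \in X ->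
  (exists t, is_P3 V e t && (P3_verts t \subset X :\ x)) /\
  (exists y t, [&& y \in X :\ x, e x y, is_P3 V e t & P3_verts t \subset X :\ x :\ y]).
Proof.
case=> es ei sXV [hc hcv] cX xX.
have c4 : #|X :\ x| = 4 by move: cX; rewrite (cardsD1 x) xX => -[].
have m4' := mem_enum (mem (X :\ x)).
have U := enum_uniq (mem (X :\ x)).
move: c4 m4' U; rewrite cardE.
case: (enum (X :\ x)) => [|v1 [|v2 [|v3 [|v4 [|]]]]] //= _ m4' U.
have m4 : forall z, (z \in X :\ x) = [|| z == v1, z == v2, z == v3 | z == v4].
  by move=> z; rewrite -m4' !inE.
have n12 : v1 != v2 by apply/eqP=> h; move: U; rewrite h /= !inE eqxx.
have n13 : v1 != v3 by apply/eqP=> h; move: U; rewrite h /= !inE eqxx ?orbT.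
have n14 : v1 != v4 by apply/eqP=> h; move: U; rewrite h /= !inE eqxx ?orbT.
have n23 : v2 != v3 by apply/eqP=> h; move: U; rewrite h /= !inE eqxx ?orbT ?andbF.
have n24 : v2 != v4 by apply/eqP=> h; move: U; rewrite h /= !inE eqxx ?orbT ?andbF.
have n34 : v3 != v4 by apply/eqP=> h; move: U; rewrite h /= !inE eqxx ?orbT ?andbF.
have i1 : v1 \in X :\ x by rewrite m4 eqxx.
have i2 : v2 \in X :\ x by rewrite m4 eqxx ?orbT.
have i3 : v3 \in X :\ x by rewrite m4 eqxx ?orbT.
have i4 : v4 \in X :\ x by rewrite m4 eqxx ?orbT.
move: (i1) (i2) (i3) (i4); rewrite !in_setD1 => /andP[nx1 X1] /andP[nx2 X2] /andP[nx3 X3] /andP[nx4 X4].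
have [V1 V2 V3 V4] : [/\ v1 \in V, v2 \in V, v3 \in V & v4 \in V].
  by split; apply: (subsetP sXV).
have Vx : x \in V by apply: (subsetP sXV).
have D := (negbTE n12, nsf n12, negbTE n13, nsf n13, negbTE n14, nsf n14, negbTE n23, nsf n23, negbTE n24, nsf n24, negbTE n34, nsf n34, negbTE nx1, nsf nx1, negbTE nx2, nsf nx2, negbTE nx3, nsf nx3, negbTE nx4, nsf nx4).
have S := (es v1 x, es v2 x, es v3 x, es v4 x, es v2 v1, es v3 v1, es v4 v1, es v3 v2, es v4 v2, es v4 v3).
have memX : forall z, (z \in X) = [|| z == x, z == v1, z == v2, z == v3 | z == v4].
  move=> z; case: (eqVneq z x) => [->|hz]; first by rewrite xX.
  by rewrite -m4 in_setD1 hz.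
have C0 := conn4 es n12 n13 n14 n23 n24 n34 m4 (hcv x xX).
have m1_ : forall z, (z \in X :\ v1) = [|| z == x, z == v2, z == v3 | z == v4].
  by move=> z; rewrite in_setD1 memX; case: (eqVneq z v1) => [->|_] /=; rewrite ?D ?orbF.
have C1 := @conn4 _ (X :\ v1) e x v2 v3 v4 es (nsf_ nx2) (nsf_ nx3) (nsf_ nx4) n23 n24 n34
  m1_
  (hcv v1 X1).
have m2_ : forall z, (z \in X :\ v2) = [|| z == x, z == v1, z == v3 | z == v4].
  by move=> z; rewrite in_setD1 memX; case: (eqVneq z v2) => [->|_] /=; rewrite ?D ?orbF.
have C2 := @conn4 _ (X :\ v2) e x v1 v3 v4 es (nsf_ nx1) (nsf_ nx3) (nsf_ nx4) n13 n14 n34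
  m2_
  (hcv v2 X2).
have m3_ : forall z, (z \in X :\ v3) = [|| z == x, z == v1, z == v2 | z == v4].
  by move=> z; rewrite in_setD1 memX; case: (eqVneq z v3) => [->|_] /=; rewrite ?D ?orbF.
have C3 := @conn4 _ (X :\ v3) e x v1 v2 v4 es (nsf_ nx1) (nsf_ nx2) (nsf_ nx4) n12 n14 n24
  m3_
  (hcv v3 X3).
have m4_ : forall z, (z \in X :\ v4) = [|| z == x, z == v1, z == v2 | z == v3].
  by move=> z; rewrite in_setD1 memX; case: (eqVneq z v4) => [->|_] /=; rewrite ?D ?orbF.
have C4 := @conn4 _ (X :\ v4) e x v1 v2 v3 es (nsf_ nx1) (nsf_ nx2) (nsf_ nx3) n12 n13 n23
  m4_
  (hcv v4 X4).
split.
  have : has (fun t : T * T * T => is_P3 V e t && [&& t.1.1 \in X :\ x, t.1.2 \in X :\ x & t.2 \in X :\ x])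
    [:: (v2,v1,v3); (v2,v1,v4); (v3,v1,v4); (v1,v2,v3); (v1,v2,v4); (v3,v2,v4); (v1,v3,v2); (v1,v3,v4); (v2,v3,v4); (v1,v4,v2); (v1,v4,v3); (v2,v4,v3)].
    rewrite /= !in_setD1 ?D ?X1 ?X2 ?X3 ?X4 ?V1 ?V2 ?V3 ?V4 /=.
    move: C0 C1 C2 C3 C4; rewrite ?S.
    case: (e x v1); case: (e x v2); case: (e x v3); case: (e x v4); case: (e v1 v2); case: (e v1 v3); case: (e v1 v4); case: (e v2 v3); case: (e v2 v4); case: (e v3 v4); by [].
  case/hasP => -[[u c] w] _ /= /andP[hp /and3P[hu hc' hw]].
  by exists (u, c, w); apply/andP; split; [exact: hp | apply: P3sub].
have : has (fun p : T * (T * T * T) => [&& p.1 \in X :\ x, e x p.1, is_P3 V e p.2 &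
     [&& p.2.1.1 \in X :\ x :\ p.1, p.2.1.2 \in X :\ x :\ p.1 & p.2.2 \in X :\ x :\ p.1]])
  [:: (v1,(v3,v2,v4)); (v1,(v2,v3,v4)); (v1,(v2,v4,v3)); (v2,(v3,v1,v4)); (v2,(v1,v3,v4)); (v2,(v1,v4,v3)); (v3,(v2,v1,v4)); (v3,(v1,v2,v4)); (v3,(v1,v4,v2)); (v4,(v2,v1,v3)); (v4,(v1,v2,v3)); (v4,(v1,v3,v2))].
  rewrite /= !in_setD1 ?D ?X1 ?X2 ?X3 ?X4 ?V1 ?V2 ?V3 ?V4 /=.
  move: C0 C1 C2 C3 C4; rewrite ?S.
  case: (e x v1); case: (e x v2); case: (e x v3); case: (e x v4); case: (e v1 v2); case: (e v1 v3); case: (e v1 v4); case: (e v2 v3); case: (e v2 v4); case: (e v3 v4); by [].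
case/hasP => -[y [[u c] w]] _ /= /and4P[hy hxy hp /and3P[hu hc' hw]].
by exists y, (u, c, w); rewrite hy hxy /=; apply/andP; split; [exact: hp | apply: P3sub].
Qed.


Section Pack.
Variable T : finType.
Implicit Types (V W X Y : {set T}) (e : rel T) (S : {set T * T * T}) (t q : T * T * T).

Lemma disjI (A B : {set T}) : (forall v, v \in A -> v \notin B) -> [disjoint A & B].
Proof.
move=> h; rewrite disjoint_subset; apply/subsetP => v hv.
by rewrite inE; apply: h.
Qed.

Lemma disjE (A B : {set T}) v : [disjoint A & B] -> v \in A -> v \notin B.
Proof. by move=> d vA; apply/negP => vB; move: d; rewrite disjoint_subset => /subsetP /(_ v vA); rewrite inE vB. Qed.

Lemma verts_ne t : exists v, v \in P3_verts t.
Proof. by case: t => [[u c] w]; exists u; rewrite !inE eqxx. Qed.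

Lemma pack_add V e S t : P3_packing V e S -> is_P3 V e t ->
  (forall q, q \in S -> [disjoint P3_verts t & P3_verts q]) ->
  P3_packing V e (t |: S) /\ #|t |: S| = #|S|.+1.
Proof.
move=> /andP[/forall_inP H1 /forall_inP H2] ht hd.
have tS : t \notin S.
  apply/negP => tS; have [v hv] := verts_ne t.
  by have := disjE (hd t tS) hv; rewrite hv.
split; last by rewrite cardsU1 tS.
apply/andP; split.
  by apply/forall_inP => p; rewrite in_setU1 => /orP[/eqP->|/H1].
apply/forall_inP => p; rewrite in_setU1 => /orP[/eqP->|pS];
  apply/forall_inP => q; rewrite in_setU1 => /orP[/eqP->|qS].
- by rewrite eqxx.
- by rewrite hd ?implybT.
- by rewrite disjoint_sym hd ?implybT.
- by move: (H2 p pS) => /forall_inP /(_ q qS).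
Qed.

Lemma pack_sub V e S S' : P3_packing V e S -> S' \subset S -> P3_packing V e S'.
Proof.
move=> /andP[/forall_inP H1 /forall_inP H2] sub; apply/andP; split.
  by apply/forall_inP => p /(subsetP sub) /H1.
apply/forall_inP => p /(subsetP sub) pS; apply/forall_inP => q /(subsetP sub) qS.
by move: (H2 p pS) => /forall_inP /(_ q qS).
Qed.

Lemma pack_transfer V V' e e' S : P3_packing V' e' S ->
  (forall q, q \in S -> is_P3 V e q) -> P3_packing V e S.
Proof.
move=> /andP[_ H2] h; apply/andP; split => //.
by apply/forall_inP.
Qed.

Lemma pack_verts V e S q : P3_packing V e S -> q \in S -> P3_verts q \subset V.
Proof.
move=> /andP[/forall_inP H1 _] /H1; case: q => [[u c] w] /and4P[uV cV wV _].
exact: P3sub.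
Qed.

Lemma pack_disj V e S p q : P3_packing V e S -> p \in S -> q \in S -> p != q ->
  [disjoint P3_verts p & P3_verts q].
Proof. by move=> /andP[_ /forall_inP H2] pS qS; move: (H2 p pS) => /forall_inP /(_ q qS) /implyP. Qed.

Lemma lambda_ge V e S : P3_packing V e S -> #|S| <= lambda V e.
Proof. by move=> h; exact: (@leq_bigmax_cond _ (fun S => P3_packing V e S) (fun S => #|S|) S h). Qed.

Lemma lambda_ex V e : exists2 S, P3_packing V e S & lambda V e = #|S|.
Proof.
have h0 : P3_packing V e set0.
  by apply/andP; split; apply/forall_inP => p; rewrite inE.
have [|S hS E] := @eq_bigmax_cond _ (fun S => P3_packing V e S) (fun S => #|S|).
  by apply/card_gt0P; exists set0.
by exists S => //; exact: E.
Qed.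

End Pack.


Section Core.
Variable T : finType.
Implicit Types (V W X Y : {set T}) (e : rel T) (S : {set T * T * T}) (t q : T * T * T).

Lemma notW W X c v : (forall v, v \in W -> v \in X -> v = c) -> v \in X -> v != c -> v \notin W.
Proof. by move=> h vX vc; apply/negP => vW; rewrite (h v vW vX) eqxx in vc. Qed.

Lemma disjW W X c S t : (forall q, q \in S -> P3_verts q \subset W) ->
  (forall v, v \in W -> v \in X -> v = c) -> P3_verts t \subset X :\ c ->
  forall q, q \in S -> [disjoint P3_verts t & P3_verts q].
Proof.
move=> hS hW st q qS; apply: disjI => v /(subsetP st); rewrite in_setD1 => /andP[vc vX].
by apply/negP => /(subsetP (hS q qS)) vW; move: (notW hW vX vc); rewrite vW.
Qed.

Lemma disjXY X Y (A B : {set T}) t t' : [disjoint X & Y] -> A \subset X -> B \subset Y ->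
  P3_verts t \subset A -> P3_verts t' \subset B -> [disjoint P3_verts t & P3_verts t'].
Proof.
move=> d sA sB st st'; apply: disjI => v /(subsetP st) /(subsetP sA) vX.
apply/negP => /(subsetP st') /(subsetP sB) vY.
by move: (disjE d vX); rewrite vY.
Qed.

Lemma caseA V W X Y e S c d : simple_graph e -> P3_packing V e S ->
  (forall q, q \in S -> P3_verts q \subset W) ->
  X \subset V -> Y \subset V -> block_like X e -> block_like Y e -> #|X| = 5 -> #|Y| = 5 ->
  [disjoint X & Y] -> c \in X -> d \in Y ->
  (forall v, v \in W -> v \in X -> v = c) -> (forall v, v \in W -> v \in Y -> v = d) ->
  exists2 S2, P3_packing V e S2 & #|S2| = #|S| + 2.
Proof.
move=> sg hS hSW sXV sYV bX bY cX cY dXY cXX dY hWX hWY.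
have [[tX /andP[htX sX]] _] := leaf_P3 sg sXV bX cX cXX.
have [[tY /andP[htY sY]] _] := leaf_P3 sg sYV bY cY dY.
have [P1 C1] := pack_add hS htX (disjW hSW hWX sX).
have hd : forall q, q \in tX |: S -> [disjoint P3_verts tY & P3_verts q].
  move=> q; rewrite in_setU1 => /orP[/eqP->|qS]; last exact: (disjW hSW hWY sY).
  by apply: (disjXY _ _ _ sY sX); [rewrite disjoint_sym | apply: subD1set | apply: subD1set].
have [P2 C2] := pack_add P1 htY hd.
by exists (tY |: (tX |: S)) => //; rewrite C2 C1 addn2.
Qed.


Lemma core V W X Y e S c d z : simple_graph e -> P3_packing V e S ->
  (forall q, q \in S -> P3_verts q \subset W) ->
  (forall q, q \in S -> c \notin P3_verts q) -> (forall q, q \in S -> z \notin P3_verts q) ->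
  X \subset V -> Y \subset V -> block_like X e -> block_like Y e -> #|X| = 5 -> #|Y| = 5 ->
  [disjoint X & Y] -> c \in X -> d \in Y ->
  (forall v, v \in W -> v \in X -> v = c) -> (forall v, v \in W -> v \in Y -> v = d) ->
  z \in V -> z \notin X -> z \notin Y -> e c z ->
  exists2 S2, P3_packing V e S2 & #|S2| = #|S| + 3.
Proof.
move=> sg hS hSW hcS hzS sXV sYV bX bY cX cY dXY cXX dY hWX hWY zV zX zY ecz.
have [_ [y [tX /and4P[yX ecy htX sX]]]] := leaf_P3 sg sXV bX cX cXX.
have [[tY /andP[htY sY]] _] := leaf_P3 sg sYV bY cY dY.
move: (yX); rewrite in_setD1 => /andP[yc yXX].
have yV : y \in V by apply: (subsetP sXV).
have cV : c \in V by apply: (subsetP sXV).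
have zc : z != c by apply/eqP=> E; rewrite E cXX in zX.
have zy : z != y by apply/eqP=> E; rewrite E yXX in zX.
have ht0 : is_P3 V e (z, c, y).
  by rewrite /= zV cV yV zc eq_sym yc zy (proj1 sg) ecz ecy.
have hd0 : forall q, q \in S -> [disjoint P3_verts (z, c, y) & P3_verts q].
  move=> q qS; apply: disjI => v; rewrite !inE => /orP[/orP[]|] /eqP->.
  - exact: hzS.
  - exact: hcS.
  apply/negP => /(subsetP (hSW q qS)) yW.
  by move: (notW hWX yXX yc); rewrite yW.
have [P1 C1] := pack_add hS ht0 hd0.
have hd1 : forall q, q \in (z, c, y) |: S -> [disjoint P3_verts tX & P3_verts q].
  move=> q; rewrite in_setU1 => /orP[/eqP->|qS]; last first.
    by apply: (disjW hSW hWX _ qS); apply: (subset_trans sX); apply: subD1set.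
  apply: disjI => v /(subsetP sX); rewrite !in_setD1 => /and3P[vy vc vX].
  rewrite !inE !negb_or vy andbT; apply/andP; split; apply/negP => /eqP E.
    by rewrite -E vX in zX.
  by rewrite E eqxx in vc.
have [P2 C2] := pack_add P1 htX hd1.
have hd2 : forall q, q \in tX |: ((z, c, y) |: S) -> [disjoint P3_verts tY & P3_verts q].
  move=> q; rewrite !in_setU1 => /or3P[/eqP->|/eqP->|qS].
  - apply: (@disjXY Y X (Y :\ d) (X :\ c :\ y) _ _ _ _ _ sY sX).
    + by rewrite disjoint_sym.
    + exact: subD1set.
    + by apply: (subset_trans (subD1set _ _)); apply: subD1set.
  - apply: disjI => v /(subsetP sY); rewrite in_setD1 => /andP[_ vY].
    rewrite !inE; apply/negP => /orP[/orP[]|] /eqP E; subst v.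
    + by rewrite vY in zY.
    + by move: (disjE dXY cXX); rewrite vY.
    + by move: (disjE dXY yXX); rewrite vY.
  - exact: (disjW hSW hWY sY).
have [P3 C3] := pack_add P2 htY hd2.
by exists (tY |: (tX |: ((z, c, y) |: S))) => //; rewrite C3 C2 C1 addn3.
Qed.

End Core.


Lemma newedge (T : finType) (V W : {set T}) (e : rel T) x1 x2 u c w :
  symmetric e -> W \subset V -> is_P3 W (Gp_rel e x1 x2) (u, c, w) -> ~~ is_P3 V e (u, c, w) ->
  exists z, [&& (c == x1) || (c == x2), x1 \in P3_verts (u, c, w), x2 \in P3_verts (u, c, w),
    z \in P3_verts (u, c, w), z \in W, z != x1, z != x2 & e c z].
Proof.
move=> es sWV /= /and4P[uW cW wW /and5P[nuc ncw nuw euc ecw]].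
rewrite (subsetP sWV _ uW) (subsetP sWV _ cW) (subsetP sWV _ wW) nuc ncw nuw /= => ne.
move: euc ecw; rewrite /Gp_rel /= => euc ecw.
case E1: (e u c) in euc ne.
  rewrite /= in ne; rewrite (negbTE ne) /= in ecw.
  case/orP: ecw => /andP[/eqP Ec /eqP Ew]; rewrite Ec Ew in nuc nuw ncw E1 *;
    exists u; rewrite !inE !eqxx ?orbT ?nuc ?nuw ?uW /= es E1 //.
rewrite /= in euc.
case/orP: euc => /andP[/eqP Eu /eqP Ec]; rewrite Eu Ec in nuc nuw ncw ecw *;
  exists w; rewrite !inE !eqxx ?orbT ?wW /= !(eq_sym w) ?nuw ?ncw /=;
  case/or3P: ecw => [//|/andP[/eqP E /eqP E']|/andP[/eqP E /eqP E']];
  by [rewrite E eqxx in nuc | rewrite E' eqxx in nuw].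
Qed.


Lemma P3_back (T : finType) (V W : {set T}) (e : rel T) x1 x2 q :
  W \subset V -> is_P3 W (Gp_rel e x1 x2) q -> x1 \notin P3_verts q -> x2 \notin P3_verts q ->
  is_P3 V e q.
Proof.
case: q => [[u c] w] sWV /= /and4P[uW cW wW /and5P[nuc ncw nuw euc ecw]].
rewrite !inE !negb_or => /andP[/andP[n1u n1c] n1w] /andP[/andP[n2u n2c] n2w].
rewrite (subsetP sWV _ uW) (subsetP sWV _ cW) (subsetP sWV _ wW) nuc ncw nuw /=.
move: euc ecw; rewrite /Gp_rel /= !(eq_sym u) !(eq_sym c) (negbTE n1u) (negbTE n2u) (negbTE n1c) (negbTE n2c) /=.
by rewrite !orbF => -> ->.
Qed.

Theorem lemma3p6 (T : finType) (V : {set T}) (e : rel T)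
    (a x1 x2 : T) (X1 X2 : {set T}) :
  simple_graph e ->
  in_Gclass 2 3 V e ->
  a \in V -> deg V e a = 3 ->
  x1 != x2 -> x1 \in nbhd V e a -> x2 \in nbhd V e a ->
  x1 \in X1 -> x2 \in X2 ->
  is_5leaf V X1 e -> is_5leaf V X2 e ->
  [disjoint X1 & X2] -> a \notin X1 :|: X2 ->
  #|Gp_verts V X1 X2 x1 x2| <= 4 * lambda (Gp_verts V X1 X2 x1 x2) (Gp_rel e x1 x2) ->
  #|V| <= 4 * lambda V e.
Proof.
move=> sg _ _ _ n12 _ _ x1X1 x2X2 [[[s1 b1 _] _] _ c1] [[[s2 b2 _] _] _ c2] dis _ hyp.
set W := Gp_verts V X1 X2 x1 x2 in hyp *.
have sWV : W \subset V by apply: subsetDl.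
have x1X2 : x1 \notin X2 := disjE dis x1X1.
have x2X1 : x2 \notin X1 by apply: (disjE _ x2X2); rewrite disjoint_sym.
have hW1 : forall v, v \in W -> v \in X1 -> v = x1.
  move=> v; rewrite !inE => /andP[h _] vX; move: h; rewrite vX andbT negbK.
  by case/orP => /eqP // E; rewrite -E vX in x2X1.
have hW2 : forall v, v \in W -> v \in X2 -> v = x2.
  move=> v; rewrite !inE => /andP[h _] vX; move: h; rewrite vX orbT andbT negbK.
  by case/orP => /eqP // E; rewrite -E vX in x1X2.
have cU : forall A B : {set T}, #|A :|: B| <= #|A| + #|B|.
  by move=> A B; rewrite cardsU leq_subr.
have cV : #|V| <= #|W| + 8.
  have sub : V \subset W :|: (X1 :\ x1) :|: (X2 :\ x2).
    apply/subsetP => v vV; rewrite !inE vV andbT.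
    by case: (v == x1); case: (v == x2); case: (v \in X1); case: (v \in X2).
  have d1 : #|X1 :\ x1| = 4 by move: c1; rewrite (cardsD1 x1) x1X1 => -[].
  have d2 : #|X2 :\ x2| = 4 by move: c2; rewrite (cardsD1 x2) x2X2 => -[].
  have := subset_leq_card sub; have := cU (W :|: X1 :\ x1) (X2 :\ x2); have := cU W (X1 :\ x1).
  rewrite d1 d2; lia.
have [S' PS' ES'] := lambda_ex W (Gp_rel e x1 x2).
rewrite ES' in hyp.
suff [S2 P2 C2] : exists2 S2, P3_packing V e S2 & #|S'| + 2 <= #|S2|.
  have := lambda_ge P2; lia.
have hSW : forall q, q \in S' -> P3_verts q \subset W by move=> q qS; exact: (pack_verts PS' qS).
case: (boolP [exists p in S', ~~ is_P3 V e p]) => [/exists_inP [[[u c] w] pS np] | nex]; last first.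
have allP : forall q, q \in S' -> is_P3 V e q.
  by move=> q qS; apply/negPn/negP => h; apply: (negP nex); apply/exists_inP; exists q.
have PS := pack_transfer PS' allP.
have [S2 P2 C2] := caseA sg PS hSW s1 s2 b1 b2 c1 c2 dis x1X1 x2X2 hW1 hW2.
  by exists S2 => //; rewrite C2.
have hp : is_P3 W (Gp_rel e x1 x2) (u, c, w).
  by move: PS' => /andP[/forall_inP H1 _]; apply: H1.
have [z /and4P[cx x1in x2in /and5P[zin zW zx1 zx2 ecz]]] := newedge (proj1 sg) sWV hp np.
set p := (u, c, w) in pS np hp x1in x2in zin.
set S := S' :\ p.
have qS' : forall q, q \in S -> (q != p) && (q \in S') by move=> q; rewrite in_setD1.
have dq : forall q, q \in S -> [disjoint P3_verts p & P3_verts q].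
  move=> q /qS' /andP[qp qS]; apply: (pack_disj PS' pS qS); by rewrite eq_sym.
have allP : forall q, q \in S -> is_P3 V e q.
  move=> q qS; move: (qS) => /qS' /andP[_ qS'']; apply: (P3_back sWV).
  - by move: PS' => /andP[/forall_inP H1 _]; apply: H1.
  - exact: (disjE (dq q qS) x1in).
  - exact: (disjE (dq q qS) x2in).
have PS : P3_packing V e S.
  apply: (pack_transfer _ allP); apply: (pack_sub PS'); exact: subD1set.
have hSW' : forall q, q \in S -> P3_verts q \subset W.
  by move=> q /qS' /andP[_ /hSW].
have hzS : forall q, q \in S -> z \notin P3_verts q by move=> q qS; exact: (disjE (dq q qS) zin).
have zV : z \in V by apply: (subsetP sWV).
have zX1 : z \notin X1 by apply/negP => /(hW1 z zW) E; rewrite E eqxx in zx1.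
have zX2 : z \notin X2 by apply/negP => /(hW2 z zW) E; rewrite E eqxx in zx2.
have cS : #|S'| = #|S|.+1 by rewrite (cardsD1 p S') pS.
case/orP: cx => /eqP Ec; rewrite Ec in ecz.
  have hcS : forall q, q \in S -> x1 \notin P3_verts q by move=> q qS; exact: (disjE (dq q qS) x1in).
  have [S2 P2 C2] := core sg PS hSW' hcS hzS s1 s2 b1 b2 c1 c2 dis x1X1 x2X2 hW1 hW2 zV zX1 zX2 ecz.
  by exists S2 => //; rewrite C2 cS addn3 addn2.
have hcS : forall q, q \in S -> x2 \notin P3_verts q by move=> q qS; exact: (disjE (dq q qS) x2in).
have dis' : [disjoint X2 & X1] by rewrite disjoint_sym.
have [S2 P2 C2] := core sg PS hSW' hcS hzS s2 s1 b2 b1 c2 c1 dis' x2X2 x1X1 hW2 hW1 zV zX2 zX1 ecz.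
by exists S2 => //; rewrite C2 cS addn3 addn2.
Qed.
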